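(* Let $A\in\mathrm{GL}_{n}(\mathbb{Z})$ and let $G=\mathbb{Z}^{n}\rtimes_{A}\mathbb{Z}$, where a generator of $\mathbb{Z}$ acts on $\mathbb{Z}^{n}$ via $A$. Let $l:G\to[0,\infty)$ be a length function. Then the restriction of $l$ to $\mathbb{Z}^{n}$ extends to a continuous function $l:\mathbb{R}^{n}\to[0,\infty)$ satisfying: (1) $l(r_{1}+r_{2})\leq l(r_{1})+l(r_{2})$ for all $r_{1},r_{2}\in\mathbb{R}^{n}$; (2) $l(ar)=|a|\,l(r)$ for all $a\in\mathbb{R}$, $r\in\mathbb{R}^{n}$; (3) $l(Ar)=l(r)$ for all $r\in\mathbb{R}^{n}$.
   Context: A length function on a group $G$ is a function $l:G\to[0,\infty)$ such that $l(g^{n})=|n|\,l(g)$ for all $g\in G,n\in\mathbb{Z}$; $l(hgh^{-1})=l(g)$ for all $g,h$; and $l(ab)\leq l(a)+l(b)$ whenever $a,b$ commute. *)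

(* Defs.v *)
From HB Require Import structures.
From mathcomp Require Import all_boot all_order all_algebra.
From mathcomp Require Import all_classical all_reals all_analysis.
Set Implicit Arguments. Unset Strict Implicit. Unset Printing Implicit Defensive.
Import Order.TTheory GRing.Theory Num.Theory numFieldNormedType.Exports.
Local Open Scope ring_scope.

(* The semidirect product G = Z^n x|_A Z, with elements (v, k), v a column
   vector in Z^n, k in Z, and the generator 1 of Z acting on Z^n by v |-> A v:
   (v, k) * (w, m) = (v + A^k w, k + m). *)
Section SemiDirect.
Variables (n : nat) (A : 'M[int]_n).

Definition mpow (k : int) : 'M[int]_n :=
  match k with
  | Posz m => iter m (mulmx A) 1%:M
  | Negz m => iter m.+1 (mulmx (invmx A)) 1%:M
  end.

Definition sdp := ('cV[int]_n * int)%type.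

Definition sdp_one : sdp := (0, 0).
Definition sdp_mul (g h : sdp) : sdp := (g.1 + mpow g.2 *m h.1, g.2 + h.2).
Definition sdp_inv (g : sdp) : sdp := (- (mpow (- g.2) *m g.1), - g.2).

Definition sdp_expn (g : sdp) (m : nat) : sdp := iter m (sdp_mul g) sdp_one.
Definition sdp_expz (g : sdp) (z : int) : sdp :=
  match z with
  | Posz m => sdp_expn g m
  | Negz m => sdp_expn (sdp_inv g) m.+1
  end.

Definition is_length_function (R : realType) (l : sdp -> R) : Prop :=
  [/\ forall g, 0 <= l g,
      forall g (z : int), l (sdp_expz g z) = `|z|%:~R * l g,
      forall g h, l (sdp_mul (sdp_mul h g) (sdp_inv h)) = l g &
      forall a b, sdp_mul a b = sdp_mul b a -> l (sdp_mul a b) <= l a + l b].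

End SemiDirect.

(* Main.v *)
Require Import Defs.
From HB Require Import structures.
From mathcomp Require Import all_boot all_order all_algebra.
From mathcomp Require Import all_classical all_reals all_analysis.
From mathcomp Require Import lra.
Import Order.TTheory GRing.Theory Num.Theory numFieldNormedType.Exports.
Local Open Scope ring_scope.

Section Proof6.
Variables (R : realType) (n : nat) (A : 'M[int]_n) (l : sdp n -> R).
Hypothesis hA : A \in unitmx.
Hypothesis hl : is_length_function A l.

Definition ff (v : 'cV[int]_n) := l (v, 0).

Lemma sdp_mul0 (v w : 'cV[int]_n) : sdp_mul A (v,0) (w,0) = (v + w, 0).
Proof. by rewrite /sdp_mul /= mul1mx addr0. Qed.

Lemma sdp_expn0 (v : 'cV[int]_n) m : sdp_expn A (v,0) m = (v *+ m, 0).
Proof.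
elim: m => [|m IH] /=; first by rewrite mulr0n.
by rewrite IH sdp_mul0 mulrS.
Qed.

Lemma sdp_expz0 (v : 'cV[int]_n) (z : int) : sdp_expz A (v,0) z = (v *~ z, 0).
Proof.
case: z => m /=.
  by rewrite sdp_expn0.
have -> : sdp_inv A (v, 0) = (- v, 0) by rewrite /sdp_inv /= oppr0 mul1mx.
by rewrite sdp_expn0 sdp_mul0 -mulrS NegzE mulrNz -mulNrn.
Qed.

Lemma ff_ge0 v : 0 <= ff v.
Proof. by case: hl => h _ _ _; apply: h. Qed.

Lemma ff_mulz v (z : int) : ff (v *~ z) = `|z|%:~R * ff v.
Proof. by case: hl => _ h _ _; rewrite /ff -sdp_expz0 h. Qed.

Lemma ff_scale v (z : int) : ff (z *: v) = `|z|%:~R * ff v.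
Proof. by rewrite -ff_mulz -scaler_int intz. Qed.

Lemma ff0 : ff 0 = 0.
Proof. by rewrite -(mulr0z (0 : 'cV[int]_n)) ff_mulz mul0r. Qed.

Lemma ffD v w : ff (v + w) <= ff v + ff w.
Proof.
case: hl => _ _ _ h; rewrite /ff -sdp_mul0; apply: h.
by rewrite !sdp_mul0 addrC.
Qed.

Lemma ffA v : ff (A *m v) = ff v.
Proof.
case: hl => _ _ h _; rewrite /ff -(h (v, 0) (0, 1)).
rewrite /sdp_mul /sdp_inv /= mulmx0 addr0 subrr mulmx1. by rewrite oppr0 mulmx0 add0r addr0.
Qed.

Lemma ffAV v : ff (invmx A *m v) = ff v.
Proof. by rewrite -ffA mulmxA mulmxV // mul1mx. Qed.

Lemma ff_sum (I : Type) (s : seq I) (F : I -> 'cV[int]_n) :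
  ff (\sum_(i <- s) F i) <= \sum_(i <- s) ff (F i).
Proof.
elim: s => [|a s IH]; first by rewrite !big_nil ff0.
rewrite !big_cons; apply: le_trans (ffD _ _) _; exact: lerD.
Qed.

Definition C (j : 'I_n) := ff (delta_mx j 0).

Lemma ff_bound v : ff v <= \sum_j `|v j 0|%:~R * C j.
Proof.
rewrite {1}(matrix_sum_delta v); apply: le_trans (ff_sum _ _ _) _.
apply: ler_sum => j _; rewrite big_ord1 ff_scale.
by rewrite /C; have -> : (0 : 'I_1) = ord0 by apply/val_inj.
Qed.


Definition iv (v : 'cV[int]_n) : 'cV[R]_n := map_mx (fun z : int => z%:~R) v.

Lemma floor_abs (x : R) : `|(Num.floor x)%:~R| <= `|x| + 1.
Proof.
have h1 := floor_le x; have h2 := floorD1_gt x; rewrite intrD in h2.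
have /andP[h3 h4] : - `|x| <= x <= `|x| by rewrite -ler_norml.
rewrite ler_norml; apply/andP; split; lra.
Qed.

Lemma floor_frac (x : R) : `|x - (Num.floor x)%:~R| <= 1.
Proof.
have h1 := floor_le x; have h2 := floorD1_gt x; rewrite intrD in h2.
rewrite ler_norml; apply/andP; split; lra.
Qed.

Lemma hard (v : 'cV[int]_n) (s : seq (R * 'cV[int]_n)) :
  iv v = \sum_(p <- s) p.1 *: iv p.2 ->
  ff v <= \sum_(p <- s) `|p.1| * ff p.2.
Proof.
move=> hv.
set S := \sum_(p <- s) `|p.1| * ff p.2.
set T := \sum_(p <- s) ff p.2.
set B := \sum_j (\sum_(p <- s) `|p.2 j 0|%:~R) * C j.
have hvj : forall j, (v j 0)%:~R = \sum_(p <- s) p.1 * (p.2 j 0)%:~R :> R.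
  move=> j; have := congr1 (fun M : 'cV[R]_n => M j 0) hv.
  rewrite /iv mxE summxE => ->; apply: eq_bigr => p _; by rewrite !mxE.
have key : forall N : nat, N%:R * ff v <= N%:R * S + (T + B).
  move=> N.
  pose fl (p : R * 'cV[int]_n) := Num.floor (N%:R * p.1).
  pose u := \sum_(p <- s) fl p *: p.2.
  pose w := v *+ N - u.
  have -> : N%:R * ff v = ff (v *+ N) by rewrite -(mulrz_nat N v) ff_mulz normr_nat mulrz_nat.
  have -> : v *+ N = u + w by rewrite /w addrC subrK.
  apply: le_trans (ffD _ _) _.
  rewrite addrA; apply: lerD.
  - apply: le_trans (ff_sum _ _ _) _.
    rewrite /S /T mulr_sumr -big_split /=; apply: ler_sum => p _.
    rewrite ff_scale mulrA -{3}(mul1r (ff p.2)) -mulrDl.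
    apply: ler_wpM2r; first exact: ff_ge0.
    rewrite intr_norm; apply: le_trans (floor_abs _) _.
    by rewrite normrM normr_nat.
  - apply: le_trans (ff_bound w) _; apply: ler_sum => j _.
    apply: ler_wpM2r; first exact: ff_ge0.
    have wE : (w j 0)%:~R = \sum_(p <- s) (N%:R * p.1 - (fl p)%:~R) * (p.2 j 0)%:~R :> R.
      rewrite /w /u !mxE summxE rmorphB /= mulmxnE rmorphMn /= hvj rmorph_sum /=.
      rewrite -sumrMnl -sumrB; apply: eq_bigr => p _.
      by rewrite !mxE rmorphM /= mulrBl mulr_natl mulrnAl.
    rewrite intr_norm wE; apply: le_trans (ler_norm_sum _ _ _) _.
    apply: ler_sum => p _; rewrite normrM intr_norm.
    by apply: ler_piMl => //; apply: floor_frac.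
rewrite leNgt; apply/negP => hlt.
have TB0 : 0 <= T + B.
  apply: addr_ge0; apply: sumr_ge0 => p _.
    exact: ff_ge0.
  apply: mulr_ge0; last exact: ff_ge0.
  by apply: sumr_ge0 => q _; rewrite intr_norm.
have d0 : 0 < ff v - S by rewrite subr_gt0.
have := archi_boundP (divr_ge0 TB0 (ltW d0)).
rewrite ltr_pdivrMr // => hb.
have := key (Num.bound ((T + B) / (ff v - S))).
move: hb; rewrite mulrBr; lra.
Qed.


Definition rep (r : 'cV[R]_n) : set R := fun x =>
  exists s : seq (R * 'cV[int]_n),
    r = \sum_(p <- s) p.1 *: iv p.2 /\ x = \sum_(p <- s) `|p.1| * ff p.2.

Definition L r := inf (rep r).

Lemma rep_ge0 r x : rep r x -> 0 <= x.
Proof.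
case=> s [_ ->]; apply: sumr_ge0 => p _.
exact: mulr_ge0 (normr_ge0 _) (ff_ge0 _).
Qed.

Lemma rep_lb r : has_lbound (rep r).
Proof. by exists 0 => x /rep_ge0. Qed.

Lemma rep_basis r : rep r (\sum_j `|r j 0| * C j).
Proof.
exists [seq (r j 0, delta_mx j 0) | j <- index_enum 'I_n].
rewrite !big_map /=; split => //.
rewrite {1}(matrix_sum_delta r); apply: eq_bigr => j _.
rewrite big_ord1 /iv (map_delta_mx (intr : int -> R)).
by have -> : (0 : 'I_1) = ord0 by apply/val_inj.
Qed.

Lemma rep_ne r : (rep r !=set0)%classic.
Proof. by exists (\sum_j `|r j 0| * C j); apply: rep_basis. Qed.

Lemma L_ge0 r : 0 <= L r.
Proof. by apply: lb_le_inf (rep_ne r) _ => x /rep_ge0. Qed.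

Lemma L_le r x : rep r x -> L r <= x.
Proof. exact: (ge_inf (rep_lb r)). Qed.

Lemma L_basis r : L r <= \sum_j `|r j 0| * C j.
Proof. exact/L_le/rep_basis. Qed.

Lemma rep_add r1 r2 x1 x2 : rep r1 x1 -> rep r2 x2 -> rep (r1 + r2) (x1 + x2).
Proof.
case=> s1 [-> ->] [s2 [-> ->]]; exists (s1 ++ s2).
by rewrite !big_cat.
Qed.

Lemma L_add r1 r2 : L (r1 + r2) <= L r1 + L r2.
Proof.
have h2 : forall x2, rep r2 x2 -> L (r1 + r2) - x2 <= L r1.
  move=> x2 hx2; apply: lb_le_inf (rep_ne r1) _ => x1 hx1.
  have := L_le _ _ (rep_add _ _ _ _ hx1 hx2); lra.
have : L (r1 + r2) - L r1 <= L r2.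
  apply: lb_le_inf (rep_ne r2) _ => x2 hx2.
  have := h2 x2 hx2; lra.
lra.
Qed.

Lemma rep_scale a r x : rep r x -> rep (a *: r) (`|a| * x).
Proof.
case=> s [-> ->]; exists [seq (a * p.1, p.2) | p <- s].
rewrite !big_map /= scaler_sumr mulr_sumr; split; apply: eq_bigr => p _.
  by rewrite scalerA.
by rewrite normrM mulrA.
Qed.

Lemma L_scale_le a r : L (a *: r) <= `|a| * L r.
Proof.
case: (eqVneq a 0) => [->|a0].
  rewrite scale0r normr0 mul0r; apply: L_le; exists [::].
  by rewrite !big_nil.
rewrite mulrC -ler_pdivrMr ?normr_gt0 //.
apply: lb_le_inf (rep_ne r) _ => x hx.
rewrite ler_pdivrMr ?normr_gt0 // mulrC; exact: L_le _ _ (rep_scale a _ _ hx).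
Qed.

Lemma L_scale a r : L (a *: r) = `|a| * L r.
Proof.
apply/eqP; rewrite eq_le L_scale_le /=.
case: (eqVneq a 0) => [->|a0]; first by rewrite normr0 mul0r L_ge0.
have := L_scale_le a^-1 (a *: r); rewrite scalerA mulVf // scale1r normfV => h.
have := ler_wpM2l (normr_ge0 a) h.
by rewrite mulrA mulfV ?normr_eq0 // mul1r.
Qed.

Definition iM (M : 'M[int]_n) : 'M[R]_n := map_mx (fun z : int => z%:~R) M.

Lemma rep_mul M r x : (forall v, ff (M *m v) = ff v) ->
  rep r x -> rep (iM M *m r) x.
Proof.
move=> hM [s [-> ->]]; exists [seq (p.1, M *m p.2) | p <- s].
rewrite !big_map /= mulmx_sumr; split; apply: eq_bigr => p _ /=.
  by rewrite /iv (map_mxM (intr : int -> R)) scalemxAr.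
by rewrite hM.
Qed.

Lemma L_mul_le M r : (forall v, ff (M *m v) = ff v) -> L (iM M *m r) <= L r.
Proof.
move=> hM; apply: lb_le_inf (rep_ne r) _ => x hx.
exact: L_le _ _ (rep_mul _ _ _ hM hx).
Qed.

Lemma L_A r : L (iM A *m r) = L r.
Proof.
apply/eqP; rewrite eq_le L_mul_le /=; last exact: ffA.
have := L_mul_le (invmx A) (iM A *m r) ffAV.
rewrite mulmxA /iM -(map_mxM (intr : int -> R)) mulVmx //.
by rewrite (map_mx1 (intr : int -> R)) mul1mx.
Qed.

Lemma L_iv v : L (iv v) = ff v.
Proof.
apply/eqP; rewrite eq_le; apply/andP; split.
  apply: L_le; exists [:: (1, v)]; rewrite !big_seq1 /=.
  by rewrite scale1r normr1 mul1r.
apply: lb_le_inf (rep_ne _) _ => x [s [hs ->]]; exact: hard hs.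
Qed.

Lemma entry_le (r : 'cV[R]_n) i j : `|r i j| <= `|r|.
Proof.
have /mapP[k Hk ->] : `|r i j| \in [seq `|r x.1 x.2| | x : 'I_n * 'I_1].
  by apply/mapP; exists (i, j) => //=; rewrite mem_enum.
by rewrite [leRHS]/Num.norm /= mx_normrE; apply/bigmax_geP; right => /=; exists k.
Qed.

Lemma L_lip r : L r <= (\sum_j C j) * `|r|.
Proof.
apply: le_trans (L_basis r) _; rewrite mulr_suml; apply: ler_sum => j _.
rewrite mulrC; apply: ler_wpM2l; first exact: ff_ge0.
exact: entry_le.
Qed.

Lemma L_diff x y : `|L x - L y| <= L (x - y).
Proof.
have h1 : L x <= L y + L (x - y) by have := L_add y (x - y); rewrite [y + _]addrC subrK.
have h2 : L y <= L x + L (y - x) by have := L_add x (y - x); rewrite [x + _]addrC subrK.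
have h3 : L (y - x) = L (x - y).
  by rewrite -opprB -scaleN1r L_scale normrN normr1 mul1r.
rewrite ler_norml; apply/andP; split; lra.
Qed.

Lemma L_cont : continuous L.
Proof.
move=> x; apply/(@cvgrPdist_lt _ _ _ (nbhs x) (nbhs_filter x)) => e e0.
set K := \sum_j C j.
have K0 : 0 <= K by apply: sumr_ge0 => j _; exact: ff_ge0.
apply/(@nbhs_normP R _ x); exists (e / (K + 1)) => /=.
  by rewrite divr_gt0 // ltr_wpDl.
move=> y /= hy.
have hy' : (K + 1) * `|x - y| < e by rewrite -ltr_pdivlMl ?ltr_wpDl // mulrC.
have h1 := L_diff x y; have h2 := L_lip (x - y); have h3 := normr_ge0 (x - y).
rewrite -/K in h2; rewrite mulrDl mul1r in hy'.
have h4 : 0 <= K * `|x - y| by apply: mulr_ge0.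
lra.
Qed.

End Proof6.

Theorem lemma6 (R : realType) (n : nat) (A : 'M[int]_n) (l : sdp n -> R) :
  A \in unitmx ->
  is_length_function A l ->
  exists L : 'cV[R]_n -> R,
    [/\ continuous L, forall r, 0 <= L r,
        forall v : 'cV[int]_n, L (map_mx (fun z : int => z%:~R) v) = l (v, 0) &
      [/\
        forall r1 r2, L (r1 + r2) <= L r1 + L r2,
        forall (a : R) r, L (a *: r) = `|a| * L r &
        forall r, L (map_mx (fun z : int => z%:~R) A *m r) = L r]].
Proof.
move=> hA hl; exists (@L R n l); split.
- exact: L_cont hl.
- exact: L_ge0 hl.
- exact: L_iv hl.
split.
- exact: L_add hl.
- exact: L_scale hl.
- exact: L_A hA hl.
Qed.
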